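(* Let $\varepsilon\ge0$, $\mathcal L'\subseteq\mathcal L$, $\mathcal J'\subseteq\mathcal J$. If $B=\mathcal L'\cup\mathcal J'$ is a basis of $\mathrm{LP}(\theta,\varepsilon)$, then its basic solution $x\in\mathbb R^L$ satisfies, for $(ij)\in\mathcal L$, $$x_{ij}=\begin{cases}\sum_{k\in\mathsf C(\mathcal T(i))}\lambda_k-\sum_{\ell\in\mathsf S(\mathcal T(i))}(\mu_\ell-\varepsilon)&\text{if } i\text{ is a child of } j\text{ in }\mathcal G(\mathcal L',\mathcal J'),\\ \sum_{\ell\in\mathsf S(\mathcal T(j))}(\mu_\ell-\varepsilon)-\sum_{k\in\mathsf C(\mathcal T(j))}\lambda_k&\text{if } i\text{ is the parent of } j\text{ in }\mathcal G(\mathcal L',\mathcal J'),\\ 0&\text{if }(ij)\in\mathcal L\setminus\mathcal L'.\end{cases}$$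
   Context: $\mathcal I=\{1,\dots,I\}$ and $\mathcal J=\{1,\dots,J\}$ are disjoint node sets, $\mathcal L\subseteq\mathcal I\times\mathcal J$, $L=|\mathcal L|$, $\mathcal S_i=\{j:(ij)\in\mathcal L\}$, $\mathcal C_j=\{i:(ij)\in\mathcal L\}$. For $\lambda\in\mathbb R^I_{>0}$, $\mu\in\mathbb R^J_{>0}$, $\theta\in\mathbb R^L_{\ge0}$, $\mathrm{LP}(\theta,\varepsilon)$ in standard form is: maximize $\sum\theta_{ij}x_{ij}$ s.t. $\sum_{j\in\mathcal S_i}x_{ij}=\lambda_i$ ($i\in\mathcal I$), $\sum_{i\in\mathcal C_j}x_{ij}+\sigma_j=\mu_j-\varepsilon$ ($j\in\mathcal J$), $x,\sigma\ge0$, with variables indexed by $\mathcal L\cup\mathcal J$. A basis is $B\subseteq\mathcal L\cup\mathcal J$ with $|B|=I+J$ and invertible corresponding column submatrix; the basic solution is the unique solution of the equality constraints with all variables outside $B$ equal to $0$. $\mathcal G(\mathcal L',\mathcal J')$ is the subgraph of the bipartite graph $(\mathcal I\cup\mathcal J,\mathcal L)$ with edge set $\mathcal L'$; when $B$ is a basis it is a spanning forest (acyclic, containing all nodes, each tree containing exactly one node of $\mathcal J'$), and each tree is rooted at its node in $\mathcal J'$, which defines parent/child relations. $\mathcal T(v)$ is the subtree rooted at node $v$ including $v$, $\mathsf C(\mathcal T(v))=\mathcal T(v)\cap\mathcal I$, $\mathsf S(\mathcal T(v))=\mathcal T(v)\cap\mathcal J$. *)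

(* Defs.v *)
From HB Require Import structures.
From mathcomp Require Import all_boot all_order all_algebra.
Set Implicit Arguments. Unset Strict Implicit. Unset Printing Implicit Defensive.
Import Order.TTheory GRing.Theory Num.Theory.
Local Open Scope ring_scope.

(* Nodes of the bipartite graph: inl i (i in I = 'I_nI), inr j (j in J = 'I_nJ).
   Edges: pairs (i, j).  LP variables: inl (i,j) for edges, inr j for slacks. *)

(* Column of the constraint matrix of LP(theta, eps) for variable v,
   evaluated at constraint row r (row inl i: supply constraint of i,
   row inr j: capacity constraint of j). *)
Definition colA (R : nzRingType) (nI nJ : nat)
  (v : ('I_nI * 'I_nJ) + 'I_nJ) (r : 'I_nI + 'I_nJ) : R :=
  match v, r with
  | inl (i, j), inl i' => (i' == i)%:R
  | inl (i, j), inr j' => (j' == j)%:R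
  | inr j, inl _ => 0
  | inr j, inr j' => (j' == j)%:R
  end.

Definition basis_set (nI nJ : nat) (L' : {set 'I_nI * 'I_nJ}) (J' : {set 'I_nJ})
  : {set ('I_nI * 'I_nJ) + 'I_nJ} :=
  [set inl e | e in L'] :|: [set inr j | j in J'].

Definition basis_mx (R : nzRingType) (nI nJ : nat) (B : {set ('I_nI * 'I_nJ) + 'I_nJ})
  : 'M[R]_(nI + nJ, #|B|) :=
  \matrix_(r < nI + nJ, b < #|B|) colA R (enum_val b) (split r).

Definition is_basis (R : fieldType) (nI nJ : nat) (L L' : {set 'I_nI * 'I_nJ})
  (J' : {set 'I_nJ}) : Prop :=
  [/\ L' \subset L,
      #|basis_set L' J'| = (nI + nJ)%N &
      \rank (basis_mx R (basis_set L' J')) = (nI + nJ)%N].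

Definition basic_solution (R : nzRingType) (nI nJ : nat) (L L' : {set 'I_nI * 'I_nJ})
  (J' : {set 'I_nJ}) (lam : 'I_nI -> R) (mu : 'I_nJ -> R) (eps : R)
  (x : 'I_nI * 'I_nJ -> R) (sigma : 'I_nJ -> R) : Prop :=
  [/\ (forall i, \sum_(j | (i, j) \in L) x (i, j) = lam i),
      (forall j, \sum_(i | (i, j) \in L) x (i, j) + sigma j = mu j - eps),
      (forall e, e \in L -> e \notin L' -> x e = 0) &
      (forall j, j \notin J' -> sigma j = 0)].

Definition gadj (nI nJ : nat) (L' : {set 'I_nI * 'I_nJ}) : rel ('I_nI + 'I_nJ) :=
  fun u w =>
  match u, w with
  | inl i, inr j => (i, j) \in L'
  | inr j, inl i => (i, j) \in L'
  | _, _ => false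
  end.

Definition gadj_wo (nI nJ : nat) (L' : {set 'I_nI * 'I_nJ}) (v : 'I_nI + 'I_nJ)
  : rel ('I_nI + 'I_nJ) :=
  fun u w => [&& gadj L' u w, u != v & w != v].

(* T(v): the subtree rooted at v (trees rooted at their node in J'):
   the nodes w of the tree of v such that every path from w to a root
   (node of J') passes through v, together with v itself. *)
Definition subtree (nI nJ : nat) (L' : {set 'I_nI * 'I_nJ}) (J' : {set 'I_nJ})
  (v : 'I_nI + 'I_nJ) : {set 'I_nI + 'I_nJ} :=
  [set w | connect (gadj L') v w &&
           ((w == v) || ~~ [exists r in J', connect (gadj_wo L' v) w (inr r)])].

Definition is_child (nI nJ : nat) (L' : {set 'I_nI * 'I_nJ}) (J' : {set 'I_nJ})
  (c p : 'I_nI + 'I_nJ) : bool :=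
  gadj L' c p && (c \in subtree L' J' p).

Definition sumC (R : nzRingType) (nI nJ : nat) (L' : {set 'I_nI * 'I_nJ})
  (J' : {set 'I_nJ}) (lam : 'I_nI -> R) (v : 'I_nI + 'I_nJ) : R :=
  \sum_(k | inl k \in subtree L' J' v) lam k.

Definition sumS (R : nzRingType) (nI nJ : nat) (L' : {set 'I_nI * 'I_nJ})
  (J' : {set 'I_nJ}) (mu : 'I_nJ -> R) (eps : R) (v : 'I_nI + 'I_nJ) : R :=
  \sum_(l | inr l \in subtree L' J' v) (mu l - eps).

(* Main.v *)
Require Import Defs.
From HB Require Import structures.
From mathcomp Require Import all_boot all_order all_algebra.
From mathcomp Require Import ring.
Import Order.TTheory GRing.Theory Num.Theory.
Local Open Scope ring_scope.
Set Implicit Arguments. Unset Strict Implicit. Unset Printing Implicit Defensive.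

Definition ewo (T : finType) (e : rel T) (D : pred T) : rel T :=
  fun u w => [&& e u w, u \notin D & w \notin D].

Lemma FH (T : finType) (e : rel T) (D : pred T) x p :
  path e x p ->
  [\/ x \in D,
      last x p \notin D /\ connect (ewo e D) x (last x p) |
      exists z d, [/\ d \in D, z \notin D, connect (ewo e D) x z & e z d]].
Proof.
elim: p x => [|y p IH] x /=.
  by move=> _; case: (boolP (x \in D)) => Hx; [constructor 1|constructor 2; split].
case/andP=> exy /IH H.
case: (boolP (x \in D)) => Hx; first by constructor 1.
case: (boolP (y \in D)) => Hy.
  by constructor 3; exists x, y; split.
have exy' : ewo e D x y by rewrite /ewo exy Hx Hy.
case: H => [|[H1 H2]|[z [d [H1 H2 H3 H4]]]]; first by rewrite (negbTE Hy).
  by constructor 2; split => //; apply: connect_trans (connect1 exy') H2.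
by constructor 3; exists z, d; split => //; apply: connect_trans (connect1 exy') H3.
Qed.
Definition Acomb (R : nzRingType) nI nJ (c : ('I_nI * 'I_nJ) + 'I_nJ -> R)
  (r : 'I_nI + 'I_nJ) : R := \sum_v c v * colA R v r.

Lemma colA_inl (R : nzRingType) nI nJ k m (r : 'I_nI + 'I_nJ) :
  colA R (inl (k, m)) r = (r == inl k)%:R + (r == inr m)%:R.
Proof. by case: r => a /=; rewrite ?addr0 ?add0r. Qed.

Lemma colA_inr (R : nzRingType) nI nJ (l : 'I_nJ) (r : 'I_nI + 'I_nJ) :
  colA R (inr l) r = (r == inr l)%:R.
Proof. by case: r. Qed.

Lemma sum_delta (R : nzRingType) (T : finType) (w : T -> R) a :
  \sum_r w r * (r == a)%:R = w a.
Proof.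
rewrite (bigD1 a) //= eqxx mulr1 big1 ?addr0 // => r /negbTE ->; by rewrite mulr0.
Qed.

Lemma COL (R : fieldType) nI nJ (L L' : {set 'I_nI * 'I_nJ}) (J' : {set 'I_nJ})
  (c : ('I_nI * 'I_nJ) + 'I_nJ -> R) :
  is_basis R L L' J' ->
  (forall v, c v != 0 -> v \in basis_set L' J') ->
  (forall r, Acomb c r = 0) -> forall v, c v = 0.
Proof.
case=> _ Hcard Hrk Hsupp Hc v.
set B := basis_set L' J' in Hsupp Hcard Hrk *.
set A := basis_mx R B in Hrk.
pose z := \row_(b < #|B|) c (enum_val b).
have HA : row_free A^T by rewrite /row_free mxrank_tr Hrk Hcard.
have Hz : z *m A^T = 0.
  apply/rowP => r; rewrite !mxE.
  transitivity (Acomb c (split r)); last by rewrite Hc.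
  rewrite /Acomb.
  transitivity (\sum_(v in B) c v * colA R v (split r)).
    by rewrite (big_enum_val (fun v => c v * colA R v (split r))); apply: eq_bigr => b _; rewrite !mxE.
  rewrite [RHS](bigID (fun v => v \in B)) /= [X in _ = _ + X]big1 ?addr0 //.
  move=> u Hu; case: (eqVneq (c u) 0) => [->|/Hsupp]; first by rewrite mul0r.
  by rewrite (negbTE Hu).
move/eqP: Hz; rewrite mulmx_free_eq0 // => /eqP Hz0.
case: (boolP (v \in B)) => Hv.
  move/rowP: Hz0 => /(_ (enum_rank_in Hv v)).
  by rewrite !mxE enum_rankK_in.
by apply/eqP; apply: contraNT Hv => /Hsupp.
Qed.

Lemma ROW (R : fieldType) nI nJ (L L' : {set 'I_nI * 'I_nJ}) (J' : {set 'I_nJ})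
  (w : 'I_nI + 'I_nJ -> R) :
  is_basis R L L' J' ->
  (forall v, v \in basis_set L' J' -> \sum_r w r * colA R v r = 0) ->
  forall r, w r = 0.
Proof.
case=> _ Hcard Hrk Hw r.
set B := basis_set L' J' in Hw Hcard Hrk *.
set A := basis_mx R B in Hrk.
pose y := \row_(s < nI + nJ) w (split s).
have HA : row_free A by rewrite /row_free Hrk.
have Hy : y *m A = 0.
  apply/rowP => b; rewrite !mxE.
  rewrite -[RHS](Hw (enum_val b) (enum_valP b)).
  rewrite (reindex (@split nI nJ)) /=; last first.
    by exists (@unsplit nI nJ) => s _; rewrite ?splitK ?unsplitK.
  by apply: eq_bigr => s _; rewrite !mxE.
move/eqP: Hy; rewrite mulmx_free_eq0 // => /eqP Hy0.
move/rowP: Hy0 => /(_ (unsplit r)).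
by rewrite !mxE unsplitK.
Qed.

Lemma gadj_sym nI nJ (L' : {set 'I_nI * 'I_nJ}) : symmetric (gadj L').
Proof. by move=> [a|a] [b|b]. Qed.

Lemma gadj_wo_sym nI nJ (L' : {set 'I_nI * 'I_nJ}) v : symmetric (gadj_wo L' v).
Proof. by move=> a b; rewrite /gadj_wo gadj_sym; case: (a != v); case: (b != v); case: (gadj L' b a). Qed.

Lemma ewo_sym (T : finType) (e : rel T) D : symmetric e -> symmetric (ewo e D).
Proof. by move=> He a b; rewrite /ewo He; case: (a \notin D); case: (b \notin D); case: (e b a). Qed.

Definition sgn (R : nzRingType) nI nJ (n : 'I_nI + 'I_nJ) : R :=
  if n is inl _ then 1 else -1.

Definition dv (R : nzRingType) (T : eqType) (v0 : T) (a : R) : T -> R :=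
  fun v => if v == v0 then a else 0.

Lemma Acomb_dv (R : nzRingType) nI nJ (v0 : ('I_nI * 'I_nJ) + 'I_nJ) (a : R) r :
  Acomb (dv v0 a) r = a * colA R v0 r.
Proof.
rewrite /Acomb (bigD1 v0) //= /dv eqxx big1 ?addr0 // => v /negbTE ->.
by rewrite mul0r.
Qed.

Lemma AcombD (R : nzRingType) nI nJ (c c' : ('I_nI * 'I_nJ) + 'I_nJ -> R) r :
  Acomb (fun v => c v + c' v) r = Acomb c r + Acomb c' r.
Proof. by rewrite /Acomb -big_split; apply: eq_bigr => v _; rewrite mulrDl. Qed.

Lemma WK (R : comNzRingType) nI nJ (L' : {set 'I_nI * 'I_nJ}) u x y :
  connect (gadj_wo L' u) x y ->
  exists c : ('I_nI * 'I_nJ) + 'I_nJ -> R,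
    (forall v, c v != 0 -> exists k m, [/\ v = inl (k, m), (k, m) \in L',
                                         inl k != u & inr m != u]) /\
    (forall r, Acomb c r = sgn R x * (r == x)%:R - sgn R y * (r == y)%:R).
Proof.
move=> /connectP [p Hp ->] {y}.
elim: p x Hp => [|z p IH] x /=.
  move=> _; exists (fun _ => 0); split; first by move=> v; rewrite eqxx.
  by move=> r; rewrite subrr /Acomb big1 // => v _; rewrite mul0r.
case/andP => Hxz /IH [c [Hs Hc]].
move: Hxz; rewrite /gadj_wo; case/and3P.
case: x => [k|m]; case: z Hc => [k'|m'] Hc //= HL Hx Hz.
- exists (fun v => dv (inl (k, m')) 1 v + c v); split.
    move=> v; rewrite /dv; case: (v =P inl (k, m')) => [->|_]; last by rewrite add0r; apply: Hs.
    by move=> _; exists k, m'.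
  move=> r; rewrite AcombD Acomb_dv Hc colA_inl.
  move: (sgn R (last _ p)) => s; rewrite /sgn.
  move: ((r == inl k)%:R : R) ((r == inr m')%:R : R) ((r == last (inr m') p)%:R : R) s => a b d s'; ring.
- exists (fun v => dv (inl (k', m)) (-1) v + c v); split.
    move=> v; rewrite /dv; case: (v =P inl (k', m)) => [->|_]; last by rewrite add0r; apply: Hs.
    by move=> _; exists k', m; rewrite Hz Hx.
  move=> r; rewrite AcombD Acomb_dv Hc colA_inl.
  move: (sgn R (last _ p)) => s; rewrite /sgn.
  move: ((r == inl k')%:R : R) ((r == inr m)%:R : R) ((r == last (inl k') p)%:R : R) s => a b d s'; ring.
Qed.

Lemma inB nI nJ (L' : {set 'I_nI * 'I_nJ}) (J' : {set 'I_nJ}) e :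
  e \in L' -> inl e \in basis_set L' J'.
Proof. by move=> He; rewrite /basis_set in_setU; apply/orP; left; apply/imsetP; exists e. Qed.

Lemma supp_add (R : nzRingType) (a b : R) : a + b != 0 -> a != 0 \/ b != 0.
Proof.
case: (eqVneq a 0) => [->|]; last by left.
by rewrite add0r; right.
Qed.

Lemma ROOT (R : fieldType) nI nJ (L L' : {set 'I_nI * 'I_nJ}) (J' : {set 'I_nJ}) :
  is_basis R L L' J' ->
  forall n, [exists r in J', connect (gadj L') n (inr r)].
Proof.
move=> Hb.
pose U n := ~~ [exists r in J', connect (gadj L') n (inr r)].
pose w n : R := if U n then sgn R n else 0.
have Hw := ROW (w := w) Hb.
move=> n; case: (boolP [exists r in J', connect (gadj L') n (inr r)]) => // Un; exfalso.
suff : w n = 0 by rewrite /w /U Un; case: n {Un} => a /= /eqP; rewrite ?oppr_eq0 oner_eq0.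
apply: Hw => v; rewrite /basis_set in_setU => /orP [] /imsetP [e He ->].
  case: e He => k m He.
  under eq_bigr do rewrite colA_inl mulrDr.
  rewrite big_split /= !sum_delta /w.
  have E : U (inl k) = U (inr m).
    rewrite /U; congr (~~ _); apply: eq_existsb => r; congr (_ && _).
    apply/idP/idP => H.
      by apply: connect_trans H; apply: connect1; rewrite /= He.
    by apply: connect_trans H; apply: connect1; rewrite /= He.
  by rewrite E; case: (U (inr m)) => //=; rewrite ?addr0 // addrN.
under eq_bigr do rewrite colA_inr.
rewrite sum_delta /w /U.
have -> : [exists r in J', connect (gadj L') (inr e) (inr r)].
  by apply/existsP; exists e; rewrite He connect0.
by [].
Qed.

Lemma NC1 (R : fieldType) nI nJ (L L' : {set 'I_nI * 'I_nJ}) (J' : {set 'I_nJ}) i m j :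
  is_basis R L L' J' -> (i, m) \in L' -> (i, j) \in L' -> m != j ->
  connect (gadj_wo L' (inl i)) (inr m) (inr j) -> False.
Proof.
move=> Hb Hm Hj Hmj /(WK R) [c1 [Hs Hc]].
pose c v := c1 v + (dv (inl (i, m)) (1 : R) v + dv (inl (i, j)) (-1) v).
have H0 := COL (c := c) Hb.
have : c (inl (i, j)) = 0.
  apply: H0.
    move=> v /supp_add [/Hs [k [m' [-> Hk _ _]]]|/supp_add []]; first exact: inB.
      by rewrite /dv; case: (v =P inl (i, m)) => [-> _|_]; [exact: inB | by rewrite eqxx].
    by rewrite /dv; case: (v =P inl (i, j)) => [-> _|_]; [exact: inB | by rewrite eqxx].
  move=> r; rewrite /c !AcombD !Acomb_dv Hc !colA_inl /sgn.
  move: ((r == inl i)%:R : R) ((r == inr m)%:R : R) ((r == inr j)%:R : R) => a b d; ring.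
rewrite /c /dv eqxx.
have -> : (inl (i, j) == inl (i, m) :> ('I_nI * 'I_nJ) + 'I_nJ) = false.
  by apply/negbTE; apply: contra Hmj => /eqP [->].
have -> : c1 (inl (i, j)) = 0.
  apply/eqP; apply: contraT => /Hs [k [m' [E _ Hk _]]]; by case: E Hk => <- _; rewrite eqxx.
by rewrite add0r sub0r => /eqP; rewrite oppr_eq0 oner_eq0.
Qed.

Lemma NC2 (R : fieldType) nI nJ (L L' : {set 'I_nI * 'I_nJ}) (J' : {set 'I_nJ}) k i j :
  is_basis R L L' J' -> (k, j) \in L' -> (i, j) \in L' -> k != i ->
  connect (gadj_wo L' (inr j)) (inl k) (inl i) -> False.
Proof.
move=> Hb Hk Hi Hki /(WK R) [c1 [Hs Hc]].
pose c v := c1 v + (dv (inl (k, j)) (-1 : R) v + dv (inl (i, j)) 1 v).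
have H0 := COL (c := c) Hb.
have : c (inl (i, j)) = 0.
  apply: H0.
    move=> v /supp_add [/Hs [k' [m' [-> Hk' _ _]]]|/supp_add []]; first exact: inB.
      by rewrite /dv; case: (v =P inl (k, j)) => [-> _|_]; [exact: inB | by rewrite eqxx].
    by rewrite /dv; case: (v =P inl (i, j)) => [-> _|_]; [exact: inB | by rewrite eqxx].
  move=> r; rewrite /c !AcombD !Acomb_dv Hc !colA_inl /sgn.
  move: ((r == inl i)%:R : R) ((r == inl k)%:R : R) ((r == inr j)%:R : R) => a b d; ring.
rewrite /c /dv eqxx.
have -> : (inl (i, j) == inl (k, j) :> ('I_nI * 'I_nJ) + 'I_nJ) = false.
  by apply/negbTE; apply: contra Hki => /eqP [->].
have -> : c1 (inl (i, j)) = 0.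
  apply/eqP; apply: contraT => /Hs [k' [m' [E _ _ Hm]]]; by case: E Hm => _ <-; rewrite eqxx.
by rewrite add0r add0r => /eqP; rewrite oner_eq0.
Qed.

Lemma FLOW (R : nzRingType) nI nJ (L L' : {set 'I_nI * 'I_nJ}) (J' : {set 'I_nJ})
  (lam : 'I_nI -> R) (mu : 'I_nJ -> R) (eps : R) x sigma (T : {set 'I_nI + 'I_nJ}) :
  basic_solution L L' J' lam mu eps x sigma ->
  (forall l, inr l \in T -> l \notin J') ->
  \sum_(k | inl k \in T) lam k - \sum_(l | inr l \in T) (mu l - eps) =
  \sum_(e | e \in L) x e * ((inl e.1 \in T)%:R - (inr e.2 \in T)%:R).
Proof.
case=> Hlam Hmu _ Hsig HT.
have E1 : \sum_(k | inl k \in T) lam k = \sum_(e | e \in L) x e * (inl e.1 \in T)%:R.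
  transitivity (\sum_k \sum_(j | (k, j) \in L) x (k, j) * (inl k \in T)%:R).
    rewrite big_mkcond /=; apply: eq_bigr => k _; rewrite -big_distrl /= Hlam.
    by case: (inl k \in T); rewrite ?mulr1 ?mulr0.
  rewrite pair_big_dep /=; apply: eq_big => [[a b]|[a b] _] //.
have E2 : \sum_(l | inr l \in T) (mu l - eps) = \sum_(e | e \in L) x e * (inr e.2 \in T)%:R.
  transitivity (\sum_l \sum_(k | (k, l) \in L) x (k, l) * (inr l \in T)%:R).
    rewrite big_mkcond /=; apply: eq_bigr => l _; rewrite -big_distrl /=.
    case: (boolP (inr l \in T)) => Hl; rewrite ?mulr1 ?mulr0 //.
    by rewrite -Hmu Hsig ?addr0 //; apply: HT.
  rewrite (exchange_big_dep xpredT) //= pair_big_dep /=; apply: eq_big => [[a b]|[a b] _] //.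
rewrite E1 E2 -sumrB; apply: eq_bigr => e _; by rewrite mulrBr.
Qed.

Definition hrb nI nJ (L' : {set 'I_nI * 'I_nJ}) (J' : {set 'I_nJ}) v w :=
  [exists r in J', connect (gadj_wo L' v) w (inr r)].

Lemma subE nI nJ (L' : {set 'I_nI * 'I_nJ}) (J' : {set 'I_nJ}) v w :
  (w \in subtree L' J' v) = connect (gadj L') v w && ((w == v) || ~~ hrb L' J' v w).
Proof. by rewrite inE. Qed.

Lemma v_in nI nJ (L' : {set 'I_nI * 'I_nJ}) (J' : {set 'I_nJ}) v : v \in subtree L' J' v.
Proof. by rewrite subE connect0 eqxx. Qed.

Lemma F1 nI nJ (L' : {set 'I_nI * 'I_nJ}) (J' : {set 'I_nJ}) v a b :
  gadj L' a b -> a \in subtree L' J' v -> a != v -> b \in subtree L' J' v.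
Proof.
move=> Hab; rewrite !subE => /andP [Hva Ha] Hav.
rewrite (connect_trans Hva (connect1 Hab)) /=.
rewrite (negbTE Hav) /= in Ha.
case: (eqVneq b v) => //= Hbv.
apply: contra Ha => /existsP [r /andP [Hr Hc]].
apply/existsP; exists r; rewrite Hr /=.
apply: connect_trans Hc; apply: connect1; by rewrite /gadj_wo Hab Hav Hbv.
Qed.

Lemma F2 nI nJ (L' : {set 'I_nI * 'I_nJ}) (J' : {set 'I_nJ}) v a b :
  gadj L' a b -> a \in subtree L' J' v -> b \notin subtree L' J' v -> hrb L' J' v b.
Proof.
move=> Hab; rewrite !subE => /andP [Hva _].
rewrite (connect_trans Hva (connect1 Hab)) /=.
by case: (b == v) => //=; rewrite negbK.
Qed.

Lemma no_root nI nJ (L' : {set 'I_nI * 'I_nJ}) (J' : {set 'I_nJ}) v l :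
  inr l \in subtree L' J' v -> inr l != v -> l \notin J'.
Proof.
rewrite subE => /andP [_ H] /negbTE Hv; rewrite Hv /= in H.
apply: contra H => Hl; apply/existsP; exists l; by rewrite Hl connect0.
Qed.

Lemma BOTH (R : fieldType) nI nJ (L L' : {set 'I_nI * 'I_nJ}) (J' : {set 'I_nJ}) a b :
  is_basis R L L' J' -> a != b -> hrb L' J' b a || hrb L' J' a b.
Proof.
move=> Hb Hab.
have /existsP [r /andP [Hr Hc]] := ROOT Hb a.
rewrite (sym_connect_sym (gadj_sym L')) in Hc.
case/connectP: Hc => p Hp Ela.
pose D := [pred n | (n == a) || (n == b)].
have [HrD|[HlD _]|[z [d [HdD HzD Hcz Hzd]]]] := FH D Hp.
- case/orP: HrD => /eqP Er.
    by apply/orP; left; apply/existsP; exists r; rewrite Hr -Er connect0.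
  by apply/orP; right; apply/existsP; exists r; rewrite Hr -Er connect0.
- by rewrite -Ela inE eqxx in HlD.
- have Hzr : connect (ewo (gadj L') D) z (inr r)
    by rewrite (sym_connect_sym (ewo_sym D (gadj_sym L'))).
  have Hsub : forall c, c \in D -> subrel (ewo (gadj L') D) (connect (gadj_wo L' c)).
    move=> c Hc u w /and3P [H1 H2 H3]; apply: connect1.
    rewrite /gadj_wo H1 /=; apply/andP; split.
      by apply: contra H2 => /eqP ->.
    by apply: contra H3 => /eqP ->.
  move: HzD; rewrite inE negb_or => /andP [Hza Hzb].
  case/orP: HdD => /eqP Ed; subst d.
    apply/orP; left; apply/existsP; exists r; rewrite Hr /=.
    apply: (connect_trans (y := z)).
      by apply: connect1; rewrite /gadj_wo gadj_sym Hzd Hab Hzb.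
    by apply: (connect_sub (Hsub b _)) Hzr; rewrite inE eqxx orbT.
  apply/orP; right; apply/existsP; exists r; rewrite Hr /=.
  apply: (connect_trans (y := z)).
    by apply: connect1; rewrite /gadj_wo gadj_sym Hzd eq_sym Hab Hza.
  by apply: (connect_sub (Hsub a _)) Hzr; rewrite inE eqxx.
Qed.

Lemma lr_neq nI nJ (a : 'I_nI) (b : 'I_nJ) : (inl a == inr b :> 'I_nI + 'I_nJ) = false.
Proof. by []. Qed.
Lemma rl_neq nI nJ (a : 'I_nI) (b : 'I_nJ) : (inr b == inl a :> 'I_nI + 'I_nJ) = false.
Proof. by []. Qed.

Unset Implicit Arguments.
Set Strict Implicit.

Theorem lemma2 (R : realFieldType) (nI nJ : nat) (L : {set 'I_nI * 'I_nJ})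
  (lam : 'I_nI -> R) (mu : 'I_nJ -> R) (theta : 'I_nI * 'I_nJ -> R) (eps : R)
  (L' : {set 'I_nI * 'I_nJ}) (J' : {set 'I_nJ})
  (x : 'I_nI * 'I_nJ -> R) (sigma : 'I_nJ -> R) :
  (forall i, 0 < lam i) -> (forall j, 0 < mu j) ->
  (forall e, e \in L -> 0 <= theta e) -> 0 <= eps ->
  is_basis R L L' J' ->
  basic_solution L L' J' lam mu eps x sigma ->
  forall i j, (i, j) \in L ->
    [/\ is_child L' J' (inl i) (inr j) ->
          x (i, j) = sumC L' J' lam (inl i) - sumS L' J' mu eps (inl i),
        is_child L' J' (inr j) (inl i) ->
          x (i, j) = sumS L' J' mu eps (inr j) - sumC L' J' lam (inr j) &
        (i, j) \notin L' -> x (i, j) = 0].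
Proof.
move=> _ _ _ _ Hb Hs i j HL.
have Hs' := Hs; case: Hs' => _ _ Hx0 _.
have HLL' : L' \subset L by case: Hb.
split; last exact: Hx0.
- case/andP => /= Hij Hsub.
  set T := subtree L' J' (inl i).
  have Hnr : ~~ hrb L' J' (inr j) (inl i) by move: Hsub; rewrite subE ?lr_neq ?rl_neq /= => /andP [].
  have Hj : inr j \notin T.
    have := BOTH Hb (a := inr j) (b := inl i) isT; rewrite (negbTE Hnr) /= ?orbF => H.
    by rewrite subE H /= andbF.
  rewrite /sumC /sumS (FLOW Hs); last by move=> l Hl; apply: no_root Hl _.
  rewrite (bigD1 (i, j)) //= v_in (negbTE Hj) subr0 mulr1 big1 ?addr0 //.
  case=> k m /andP [HkmL Hne].
  case: (boolP ((k, m) \in L')) => HkmL'; last by rewrite Hx0 ?mul0r.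
  have Hadj : gadj L' (inl k) (inr m) by [].
  case: (boolP (inl k \in T)) => Hk; case: (boolP (inr m \in T)) => Hm;
    rewrite ?subrr ?mulr0 //; exfalso.
  + have Eki : inl k = inl i :> 'I_nI + 'I_nJ.
      by apply/eqP; apply: contraNT Hm => /(F1 Hadj Hk).
    case: Eki => Eki; subst k.
    have Hmj : m != j by apply: contra Hne => /eqP ->.
    have /existsP [r /andP [Hr Hc]] := F2 Hadj Hk Hm.
    case/connectP: Hc => p Hp Elr.
    have [HD|[_ HcD]|[z [d [HdD HzD Hcz Hzd]]]] := FH (pred1 (inr j)) Hp.
    * by move: HD; rewrite inE /=; apply/negP.
    * move/negP: Hnr; apply; apply/existsP; exists r; rewrite Hr /=.
      apply: (connect_trans (y := inr m)).
        by apply: connect1; rewrite /gadj_wo /= HkmL' /=.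
      rewrite Elr; apply: connect_sub HcD => u w /and3P [/and3P [H1 _ _] H2 H3].
      by apply: connect1; rewrite /gadj_wo H1 /=; rewrite !inE in H2 H3; rewrite H2 H3.
    * apply: (NC1 Hb HkmL' Hij Hmj).
      move: HdD; rewrite inE => /eqP Ed; subst d.
      apply: (connect_trans (y := z)); last exact: connect1.
      apply: connect_sub Hcz => u w /and3P [H1 _ _]; exact: connect1.
  + have : inr m = inl i :> 'I_nI + 'I_nJ.
      apply/eqP; apply: contraNT Hk => /(F1 _ Hm); apply.
      by rewrite gadj_sym.
    by [].
- case/andP => /= Hij Hsub.
  set T := subtree L' J' (inr j).
  have Hnr : ~~ hrb L' J' (inl i) (inr j) by move: Hsub; rewrite subE ?lr_neq ?rl_neq /= => /andP [].
  have Hi : inl i \notin T.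
    have := BOTH Hb (a := inl i) (b := inr j) isT; rewrite (negbTE Hnr) /= ?orbF => H.
    by rewrite subE H /= andbF.
  have Hflow := FLOW (T := T) Hs.
  rewrite /sumC /sumS -opprB Hflow; last first.
    move=> l Hl; case: (eqVneq l j) => [->|Hlj].
      by apply: contra Hnr => Hj'; apply/existsP; exists j; rewrite Hj' connect0.
    by apply: no_root Hl _; apply: contra Hlj => /eqP [->].
  rewrite (bigD1 (i, j)) //= v_in (negbTE Hi) sub0r mulrN1 opprD opprK big1 ?subr0 //.
  case=> k m /andP [HkmL Hne].
  case: (boolP ((k, m) \in L')) => HkmL'; last by rewrite Hx0 ?mul0r.
  have Hadj : gadj L' (inl k) (inr m) by [].
  case: (boolP (inl k \in T)) => Hk; case: (boolP (inr m \in T)) => Hm;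
    rewrite ?subrr ?mulr0 //; exfalso.
  + have : inl k = inr j :> 'I_nI + 'I_nJ.
      by apply/eqP; apply: contraNT Hm => /(F1 Hadj Hk).
    by [].
  + have Emj : inr m = inr j :> 'I_nI + 'I_nJ.
      apply/eqP; apply: contraNT Hk => /(F1 _ Hm); apply.
      by rewrite gadj_sym.
    case: Emj => Emj; subst m.
    have Hki : k != i by apply: contra Hne => /eqP ->.
    have Hadj' : gadj L' (inr j) (inl k) by rewrite gadj_sym.
    have /existsP [r /andP [Hr Hc]] := F2 Hadj' Hm Hk.
    case/connectP: Hc => p Hp Elr.
    have [HD|[_ HcD]|[z [d [HdD HzD Hcz Hzd]]]] := FH (pred1 (inl i)) Hp.
    * by move: HD; rewrite inE /=; apply/negP.
    * move/negP: Hnr; apply; apply/existsP; exists r; rewrite Hr /=.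
      apply: (connect_trans (y := inl k)).
        by apply: connect1; rewrite /gadj_wo /= HkmL' /=.
      rewrite Elr; apply: connect_sub HcD => u w /and3P [/and3P [H1 _ _] H2 H3].
      by apply: connect1; rewrite /gadj_wo H1 /=; rewrite !inE in H2 H3; rewrite H2 H3.
    * apply: (NC2 Hb HkmL' Hij Hki).
      move: HdD; rewrite inE => /eqP Ed; subst d.
      apply: (connect_trans (y := z)); last exact: connect1.
      apply: connect_sub Hcz => u w /and3P [H1 _ _]; exact: connect1.
Qed.
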